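(* Let $n\ge 5$ and let $\{C_i,C_j,C_k\}$ be a critical triplet in $\mathcal C_{[n]}$. Then $C_j$ and $C_k$ are not adjacent in $G_{NNI}(n)$; equivalently, $C_j$ and $C_k$ do not cover a common element of $S([n])$.
   Context: An $X$-tree is a pair $(T,\phi)$ with $T$ a finite tree and $\phi:X\to V(T)$ a map such that every vertex not in $\phi(X)$ has degree at least $3$; a vertex is labeled if it lies in $\phi(X)$. An $X$-forest is a set $\{(A,\mathcal T_A):A\in\pi\}$ where $\pi$ is a set partition of $X$ and each $\mathcal T_A$ is an $A$-tree. Contracting an edge $e=(u,v)$ removes $e$ and identifies $u,v$, the new vertex carrying the union of the labels. Deleting $e$ removes it without changing vertices; it is safe if each of $u,v$ is labeled or has degree greater than $3$. The Tuffley poset $S(X)$ is the set of $X$-forests with $\mathcal F'\le\mathcal F$ iff $\mathcal F'$ is obtained from $\mathcal F$ by a sequence of contractions and safe deletions; covers are single contractions or safe deletions. $\mathcal C_{X}$ is the set of maximal elements of $S(X)$: trees with leaves labeled bijectively by $X$ and internal vertices unlabeled of degree $3$. Here $X=[n]=\{1,\dots,n\}$. NNI: for $C\in\mathcal C_X$ and an internal edge $\alpha=(u,v)$ separating subtrees $A,B$ at $u$ from $C',D$ at $v$, swapping $B$ with $C'$ or $B$ with $D$ is a nearest neighbor interchange over $\alpha$. $G_{NNI}(n)$ is the graph on vertex set $\mathcal C_{[n]}$ with an edge between two trees iff they are related by one NNI. A critical triplet is a triple $\{C_i,C_j,C_k\}$ of elements of $\mathcal C_{[n]}$ such that: (1)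 $C_i$ has a leaf labeled $x$ whose leaf edge $e_x$ is adjacent to two internal edges $e_{x_1}$ and $e_{x_2}$; (2) $C_j\neq C_i$ and both $C_i$ and $C_j$ cover $F_j$, the element obtained from $C_i$ by contracting $e_{x_1}$; (3) $C_k\neq C_i$ and both $C_i$ and $C_k$ cover $F_k$, the element obtained from $C_i$ by contracting $e_{x_2}$. *)

(* Defs.v *)
From mathcomp Require Import all_boot.
Unset Printing Implicit Defensive.

(* X = [n] is represented by 'I_n.  Elements of S([n]) are those records
   satisfying [is_xforest]; equality in S([n]) is isomorphism [xiso]. *)
Record xforest (n : nat) := XForest {
  nv : nat;
  adj : rel 'I_nv;
  lab : 'I_n -> 'I_nv }.
Arguments XForest {n} nv adj lab.
Arguments nv {n} _.
Arguments adj {n} _ _ _.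
Arguments lab {n} _ _.

Section Defs.
Variable n : nat.
Implicit Types F G : xforest n.

Definition deg F (x : 'I_(nv F)) : nat := #|[set y | adj F x y]|.
Definition labeled F (x : 'I_(nv F)) : bool := [exists i, lab F i == x].
Definition leaf F (x : 'I_(nv F)) : bool := deg F x == 1.
Definition internal F (x : 'I_(nv F)) : bool := ~~ leaf F x.

Definition sedge (T : eqType) (x y a b : T) : bool :=
  ((x == a) && (y == b)) || ((x == b) && (y == a)).

Definition acyclic F : Prop :=
  forall s : seq 'I_(nv F), uniq s -> 2 < size s -> ~~ cycle (adj F) s.

Definition is_xforest F : Prop :=
  [/\ symmetric (adj F), (forall x, ~~ adj F x x), acyclic F,
      (forall x, exists i, connect (adj F) x (lab F i)) &
      (forall x, ~~ labeled F x -> 3 <= deg F x)].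

Definition connected F : Prop := forall x y, connect (adj F) x y.

Definition is_maxtree F : Prop :=
  [/\ is_xforest F, connected F, injective (lab F),
      (forall x, labeled F x = leaf F x) &
      (forall x, ~~ labeled F x -> deg F x = 3)].

Definition xiso F G : Prop :=
  exists f : 'I_(nv F) -> 'I_(nv G),
    [/\ bijective f, (forall i, lab G i = f (lab F i)) &
        (forall x y, adj G (f x) (f y) = adj F x y)].

(* G is (isomorphic to) the result of contracting edge (u,v) of F *)
Definition contract_on F G (u v : 'I_(nv F)) : Prop :=
  adj F u v /\
  exists f : 'I_(nv F) -> 'I_(nv G),
    [/\ (forall y, exists x, f x = y),
        f u = f v,
        (forall x y, f x = f y -> x = y \/ sedge _ x y u v),
        (forall i, lab G i = f (lab F i)) &
        (forall x' y', adj G x' y' <->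
           exists x y, [/\ f x = x', f y = y', adj F x y & ~~ sedge _ x y u v])].

Definition delete_on F G (u v : 'I_(nv F)) : Prop :=
  adj F u v /\
  exists f : 'I_(nv F) -> 'I_(nv G),
    [/\ bijective f, (forall i, lab G i = f (lab F i)) &
        (forall x y, adj G (f x) (f y) = adj F x y && ~~ sedge _ x y u v)].

Definition safe_del F (u v : 'I_(nv F)) : Prop :=
  (labeled F u || (3 < deg F u)) /\ (labeled F v || (3 < deg F v)).

Definition covers F G : Prop :=
  is_xforest F /\ is_xforest G /\
  exists u v : 'I_(nv F),
    contract_on F G u v \/ (delete_on F G u v /\ safe_del F u v).

Definition nni_swap F (u v b c : 'I_(nv F)) : xforest n :=
  XForest (nv F)
    (fun x y => (adj F x y && ~~ sedge _ x y u b && ~~ sedge _ x y v c)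
                || sedge _ x y u c || sedge _ x y v b)
    (lab F).

Definition nni F G : Prop :=
  exists u v b c : 'I_(nv F),
    adj F u v /\ internal F u /\ internal F v /\
    adj F u b /\ b != v /\ adj F v c /\ c != u /\
    xiso (nni_swap F u v b c) G.

Definition nni_adj F G : Prop := [/\ is_maxtree F, is_maxtree G & nni F G].

Definition critical_triplet (Ci Cj Ck : xforest n) : Prop :=
  is_maxtree Ci /\ is_maxtree Cj /\ is_maxtree Ck /\
  exists (x : 'I_n) (p q1 q2 : 'I_(nv Ci)),
    (* (1) leaf edge e_x = {lab x, p}, adjacent internal edges
           e_x1 = {p, q1} and e_x2 = {p, q2} *)
    leaf Ci (lab Ci x) /\ adj Ci (lab Ci x) p /\
    adj Ci p q1 /\ adj Ci p q2 /\ q1 != q2 /\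
    q1 != lab Ci x /\ q2 != lab Ci x /\
    internal Ci p /\ internal Ci q1 /\ internal Ci q2 /\
    (~ xiso Ci Cj /\
       exists Fj, contract_on Ci Fj p q1 /\ covers Ci Fj /\ covers Cj Fj) /\
    (~ xiso Ci Ck /\
       exists Fk, contract_on Ci Fk p q2 /\ covers Ci Fk /\ covers Ck Fk).

End Defs.

Arguments deg {n} F x.
Arguments labeled {n} F x.
Arguments leaf {n} F x.
Arguments internal {n} F x.
Arguments acyclic {n} F.
Arguments is_xforest {n} F.
Arguments connected {n} F.
Arguments is_maxtree {n} F.
Arguments xiso {n} F G.
Arguments contract_on {n} F G u v.
Arguments delete_on {n} F G u v.
Arguments safe_del {n} F u v.
Arguments covers {n} F G.
Arguments nni_swap {n} F u v b c.
Arguments nni {n} F G.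
Arguments nni_adj {n} F G.
Arguments critical_triplet {n} Ci Cj Ck.

(* Main.v *)
Require Import Defs.
From mathcomp Require Import all_boot.
Unset Printing Implicit Defensive.

Lemma connect_restr (T : finType) (r r' : rel T) a y :
  (forall z w, connect r a z -> r z w -> r' z w) ->
  connect r a y -> connect r' a y.
Proof.
move=> H /connectP [p pth ->].
suff: forall b, connect r a b -> connect r' a b -> path r b p -> connect r' a (last b p).
  by apply.
elim: p {pth} => [|c p IH] b Hb Hb' //= /andP[rbc pth].
apply: IH => //.
- apply: connect_trans Hb (connect1 _); exact: rbc.
- apply: connect_trans Hb' (connect1 _); exact: H Hb rbc.
Qed.

Lemma sedgeC (T : eqType) (x y a b : T) : sedge _ x y a b = sedge _ y x a b.
Proof. by rewrite /sedge; case: (x==a); case: (x==b); case: (y==a); case: (y==b). Qed.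
Lemma sedgeC2 (T : eqType) (x y a b : T) : sedge _ x y a b = sedge _ x y b a.
Proof. by rewrite /sedge; case: (x==a); case: (x==b); case: (y==a); case: (y==b). Qed.
Lemma sedge_refl (T : eqType) (a b : T) : sedge _ a b a b.
Proof. by rewrite /sedge !eqxx. Qed.
Lemma sedge_refl2 (T : eqType) (a b : T) : sedge _ b a a b.
Proof. by rewrite /sedge !eqxx orbT. Qed.
Lemma sedgeP (T : eqType) (x y a b : T) :
  reflect ((x = a /\ y = b) \/ (x = b /\ y = a)) (sedge _ x y a b).
Proof.
rewrite /sedge; apply: (iffP orP) => [[/andP[/eqP-> /eqP->]|/andP[/eqP-> /eqP->]]|[[->->]|[->->]]];
  rewrite ?eqxx; auto.
Qed.

Definition adjm n (F : xforest n) (u v : 'I_(nv F)) : rel 'I_(nv F) :=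
  fun x y => adj F x y && ~~ sedge _ x y u v.
Arguments adjm {n} F u v.
Definition side n (F : xforest n) (u v : 'I_(nv F)) : {set 'I_n} :=
  [set i | connect (adjm F u v) u (lab F i)].
Arguments side {n} F u v.
Definition QQ n (F : xforest n) (u v : 'I_(nv F)) (i j k l : 'I_n) :=
  [/\ adj F u v, i \in side F u v, j \in side F u v, k \in side F v u & l \in side F v u].
Arguments QQ {n} F u v i j k l.
Definition QE n (F : xforest n) (i j k l : 'I_n) := exists u v, QQ F u v i j k l.
Arguments QE {n} F i j k l.
Definition sg n (F : xforest n) :=
  [/\ symmetric (adj F), forall x, ~~ adj F x x & acyclic F].
Arguments sg {n} F.


Lemma xforest_sg n (F : xforest n) : is_xforest F -> sg F.
Proof. by case. Qed.
Lemma maxtree_sg n (F : xforest n) : is_maxtree F -> sg F.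
Proof. by case=> /xforest_sg. Qed.

Set Implicit Arguments.
Section Graph.
Variable n : nat.
Variable F : xforest n.
Hypothesis HF : sg F.
Local Notation V := 'I_(nv F).

Lemma adj_sym (x y : V) : adj F x y = adj F y x.
Proof. by case: HF. Qed.
Lemma adj_irr (x : V) : adj F x x = false.
Proof. by case: HF => _ H _; apply/negbTE. Qed.
Lemma adj_neq {x y : V} : adj F x y -> x != y.
Proof. by move=> H; apply/eqP=> E; rewrite E adj_irr in H. Qed.

Lemma adjm_sym (u v : V) : symmetric (adjm F u v).
Proof. by move=> x y; rewrite /adjm adj_sym sedgeC. Qed.

Lemma adjm_adj {u v x y : V} : adjm F u v x y -> adj F x y.
Proof. by case/andP. Qed.

Lemma no_tri {a b c : V} : adj F a b -> adj F b c -> adj F c a -> False.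
Proof.
move=> ab bc ca; case: HF => _ _ ac.
have := ac [:: a; b; c]; rewrite /= !inE negb_or (adj_neq ab) (adj_neq bc).
rewrite eq_sym (adj_neq ca) ab bc ca /= => H; by move/negP: (H erefl erefl).
Qed.

Lemma tri3 {a b c : V} : adj F a b -> adj F a c -> adj F b c -> False.
Proof. move=> ab ac bc; apply: no_tri ab bc _; by rewrite adj_sym. Qed.

Lemma bridge {u v : V} : adj F u v -> ~~ connect (adjm F u v) u v.
Proof.
move=> uv; apply/negP => /connectP [p pth lst].
move: lst; case: (shortenP pth) => p' pth' up' _ lst.
case: p' pth' up' lst => [|y [|z r]] pth' up' lst.
- by move: uv; rewrite lst /= adj_irr.
- by move: pth'; rewrite /= andbT; move: lst => /= <-; rewrite /adjm sedge_refl andbF.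
- case: HF => _ _ ac.
  have := ac (u :: y :: z :: r) up' erefl; rewrite /cycle rcons_path.
  rewrite (sub_path (@adjm_adj u v) pth').
  have -> : last u [:: y, z & r] = v by rewrite lst.
  by rewrite adj_sym uv.
Qed.

Lemma connect_adjm_sym (u v x y : V) :
  connect (adjm F u v) x y = connect (adjm F u v) y x.
Proof. by apply: sym_connect_sym; apply: adjm_sym. Qed.

Lemma side_disj {u v : V} {i} : adj F u v -> i \in side F u v -> i \in side F v u -> False.
Proof.
move=> uv; rewrite !inE => H1 H2.
have H2' : connect (adjm F u v) v (lab F i).
  apply: connect_restr H2 => z w _; by rewrite /adjm sedgeC2.
move/negP: (bridge uv); apply; apply: connect_trans H1 _.
by rewrite connect_adjm_sym.
Qed.

(* vertices reachable from w avoiding edge (w,u) never reach u *)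
Lemma side_incl {u v w : V} : adj F u v -> adj F u w -> w != v ->
  side F w u \subset side F u v.
Proof.
move=> uv uw wv; apply/subsetP => i; rewrite !inE => Hi.
have wu : adj F w u by rewrite adj_sym.
have Hi' : connect (adjm F u v) w (lab F i).
  apply: connect_restr Hi => z z' Hz Hzz'.
  move: (Hzz') => /andP[zz' _].
  rewrite /adjm zz' /=; apply/negP => /sedgeP [[E1 E2]|[E1 E2]].
  - by move/negP: (bridge wu); apply; rewrite E1 in Hz.
  - move/negP: (bridge wu); apply.
    have := connect_trans Hz (connect1 Hzz'); by rewrite E2.
apply: connect_trans Hi'; apply: connect1.
rewrite /adjm uw /=; apply/negP => /sedgeP [[_ E]|[E _]].
- by rewrite E eqxx in wv.
- by move: uv; rewrite E adj_irr.
Qed.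

Lemma adjmC (u v : V) : adjm F v u =2 adjm F u v.
Proof. by move=> x y; rewrite /adjm sedgeC2. Qed.

Lemma avoid_edge {u v u' v' a y : V} :
  (forall z, connect (adjm F u v) a z -> z != u' /\ z != v') ->
  connect (adjm F u v) a y -> connect (adjm F u' v') a y.
Proof.
move=> H; apply: connect_restr => z w Hz /andP[zw _].
rewrite /adjm zw /=; case: (H z Hz) => n1 n2.
apply/negP => /sedgeP [[E _]|[E _]]; by rewrite E eqxx ?andbF in n1 n2.
Qed.

Lemma side_trans {u v a : V} {k l} :
  connect (adjm F u v) a (lab F k) -> connect (adjm F u v) a (lab F l) ->
  k \in side F u v -> l \in side F u v.
Proof.
rewrite !inE => H1 H2 H3; apply: connect_trans H3 _.
apply: connect_trans _ H2; by rewrite connect_adjm_sym.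
Qed.

Lemma excl {u v u' v' : V} {i j k l} :
  QQ F u v i j k l -> QQ F u' v' i k j l -> False.
Proof.
case=> uv i1 j1 k1 l1 [uv' i2 k2 j2 l2].
case: (boolP (sedge _ u' v' u v)) => [/sedgeP [[E1 E2]|[E1 E2]]|ne].
- subst; exact: side_disj uv k2 k1.
- subst; exact: side_disj uv i1 i2.
case: (boolP (connect (adjm F u v) u u')) => cu.
- have Hav : forall z, connect (adjm F u v) v z -> z != u' /\ z != v'.
    move=> z Hz; split; apply/negP => /eqP E; subst z.
    + move/negP: (bridge uv); apply; apply: connect_trans cu _.
      by rewrite connect_adjm_sym.
    + move/negP: (bridge uv); apply; apply: connect_trans cu _.
      apply: connect_trans (connect1 (_ : adjm F u v u' v')) _.
        by rewrite /adjm uv' ne.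
      by rewrite connect_adjm_sym.
  move: k1 l1; rewrite !inE !(eq_connect (adjmC u v)) => k1 l1.
  have l3 : l \in side F u' v'.
    exact: (side_trans (avoid_edge Hav k1) (avoid_edge Hav l1) k2).
  exact: side_disj uv' l3 l2.
- have Hav : forall z, connect (adjm F u v) u z -> z != u' /\ z != v'.
    move=> z Hz; split; apply/negP => /eqP E; subst z.
    + by rewrite Hz in cu.
    + move/negP: cu; apply; apply: connect_trans Hz (connect1 _).
      by rewrite /adjm adj_sym uv' sedgeC ne.
  move: i1 j1; rewrite !inE => i1 j1.
  have j3 : j \in side F u' v'.
    exact: (side_trans (avoid_edge Hav i1) (avoid_edge Hav j1) i2).
  exact: side_disj uv' j3 j2.
Qed.

Lemma path_adjm {u v w : V} {rest : seq V} :
  path (adj F) w rest -> v \notin w :: rest -> path (adjm F u v) w rest.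
Proof.
elim: rest w => [|y r IH] w //= /andP[wy pr].
rewrite !inE !negb_or => /andP[wv /andP[yv rv]].
rewrite IH ?inE ?negb_or ?yv // andbT /adjm wy /=.
apply/negP => /sedgeP [[_ E]|[E _]]; by rewrite E eqxx in yv wv.
Qed.

Lemma avoid2 (T : finType) (A : {set T}) (a b : T) :
  2 < #|A| -> exists z, [/\ z \in A, z != a & z != b].
Proof.
move=> H; have : 0 < #|A :\ a :\ b|.
  move: H; rewrite (cardsD1 a A) (cardsD1 b (A :\ a)).
  move: (a \in A) (b \in A :\ a) => [] [] //=; rewrite ?add0n ?add1n // ?ltnS.
  all: try by move/ltnW.
  all: try by move/ltnW/ltnW.
by case/card_gt0P => z; rewrite !inE => /and3P [zb za zA]; exists z.
Qed.

Lemma uniq_size_le (s : seq V) : uniq s -> size s <= nv F.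
Proof. move/card_uniqP <-; have := max_card (mem s); by rewrite card_ord. Qed.

Lemma cyc_contra (w h z : V) rest' : uniq (w :: h :: rest') ->
  path (adj F) w (h :: rest') -> adj F w z -> z \in rest' -> False.
Proof.
move=> un pth wz zin; case: HF => _ _ acF.
move: un pth; case/splitPr: zin => r1 r2.
have -> : h :: r1 ++ z :: r2 = (h :: rcons r1 z) ++ r2 by rewrite /= cat_rcons.
rewrite -cat_cons cat_uniq cat_path => /andP[un _] /andP[pth _].
have := acF (w :: h :: rcons r1 z) un; rewrite /= size_rcons ltnS ltnS ltn0Sn /cycle => /(_ erefl).
rewrite rcons_path last_rcons; move: pth => /= /andP[-> ->]; by rewrite adj_sym wz.
Qed.

Lemma side_step {u v : V} (w : V) (rest : seq V) : is_xforest F ->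
  uniq (w :: rest) -> path (adj F) w rest -> last w rest = u -> v \notin w :: rest ->
  (exists i, i \in side F u v) \/
  (exists z, [/\ uniq (z :: w :: rest), path (adj F) z (w :: rest) & v \notin z :: w :: rest]).
Proof.
move=> Hx un pth lst vn; case: Hx => _ _ acF _ degF.
case: (boolP (labeled F w)) => [/existsP [i /eqP Ei]|nl].
  left; exists i; rewrite inE connect_adjm_sym Ei -{2}lst.
  by apply/connectP; exists rest => //; apply: path_adjm.
right.
have [z [zN zv zh]] := avoid2 _ v (head v rest) (degF w nl); rewrite inE in zN.
case: (boolP (z \in w :: rest)) => zin.
  have zw : (z == w) = false.
    rewrite eq_sym; apply/negbTE; exact: adj_neq zN.
  exfalso; move: zh zin un pth {lst vn}; case: rest => [|h rest'] /= zh.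
    by rewrite !inE zw.
  rewrite !inE zw (negbTE zh) /= => zin un pth.
  exact: cyc_contra un pth zN zin.
exists z; split.
- by rewrite cons_uniq zin un.
- by rewrite /= adj_sym zN.
- by rewrite inE negb_or eq_sym zv.
Qed.

Lemma side_label {u v : V} : is_xforest F -> adj F u v -> exists i, i \in side F u v.
Proof.
move=> Hx uv.
suff: forall k (w : V) (rest : seq V), nv F - size (w :: rest) <= k ->
  uniq (w :: rest) -> path (adj F) w rest -> last w rest = u -> v \notin w :: rest ->
  exists i, i \in side F u v.
  move=> H; apply: (H (nv F) u [::]) => //.
  - exact: leq_subr.
  - by rewrite inE eq_sym (adj_neq uv).
elim=> [|k IH] w rest hk un pth lst vn;
  (case: (side_step _ _ Hx un pth lst vn) => // [[z [un' pth' vn']]]).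
- have := uniq_size_le _ un'.
  move: hk; rewrite leqn0 subn_eq0 => hk H; have := leq_trans H hk; by rewrite ltnn.
- apply: (IH z (w :: rest)) => //.
  move: hk; rewrite [size (z :: _)]/= subnS.
  by case: (nv F - size (w :: rest)).
Qed.

End Graph.

Set Implicit Arguments.

Lemma sedge_swap (T : eqType) (x y a b : T) : sedge _ x y a b = sedge _ a b x y.
Proof.
by rewrite /sedge (eq_sym x) (eq_sym y) (eq_sym x b) (eq_sym y a); case: (a == x); case: (b == y); case: (b == x); case: (a == y).
Qed.

Lemma connect_map (T T' : finType) (r : rel T) (r' : rel T') (h : T -> T') a b :
  (forall x y, connect r a x -> r x y -> h x = h y \/ r' (h x) (h y)) ->
  connect r a b -> connect r' (h a) (h b).
Proof.
move=> H /connectP [p pth ->].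
suff: forall c, connect r a c -> connect r' (h a) (h c) -> path r c p ->
  connect r' (h a) (h (last c p)) by apply.
elim: p {pth} => [|d p IH] c Hc Hc' //= /andP[rcd pth].
apply: IH => //; first exact: connect_trans Hc (connect1 rcd).
case: (H _ _ Hc rcd) => [<- //|]; move=> H'; exact: connect_trans Hc' (connect1 H').
Qed.

Lemma connect_lift (T T' : finType) (r : rel T) (r' : rel T') (h : T -> T') a b' :
  (forall x y', connect r a x -> r' (h x) y' -> exists y, h y = y' /\ connect r x y) ->
  connect r' (h a) b' -> exists b, h b = b' /\ connect r a b.
Proof.
move=> H /connectP [p pth ->].
suff: forall c, connect r a c -> path r' (h c) p -> exists b, h b = last (h c) p /\ connect r a b.
  by apply.
elim: p {pth} => [|d p IH] c Hc /=; first by exists c.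
case/andP => rcd pth.
have [y [hy cy]] := H c d Hc rcd.
rewrite -hy in pth *; apply: IH => //; exact: connect_trans Hc cy.
Qed.

Section Contr.
Variable n : nat.
Variables F G : xforest n.
Hypothesis HF : sg F.
Variables u0 v0 : 'I_(nv F).
Variable f : 'I_(nv F) -> 'I_(nv G).
Hypothesis H0 : adj F u0 v0.
Hypothesis Hsurj : forall y, exists x, f x = y.
Hypothesis Huv : f u0 = f v0.
Hypothesis Hinj : forall x y, f x = f y -> x = y \/ sedge _ x y u0 v0.
Hypothesis Hlab : forall i, lab G i = f (lab F i).
Hypothesis Hadj : forall x' y', adj G x' y' <->
  exists x y, [/\ f x = x', f y = y', adj F x y & ~~ sedge _ x y u0 v0].
Local Notation V := 'I_(nv F).

Lemma c_pairinj {x y a b : V} : adj F x y -> adj F a b -> ~~ sedge _ x y u0 v0 ->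
  ~~ sedge _ a b u0 v0 -> f x = f a -> f y = f b -> x = a /\ y = b.
Proof.
move=> xy ab nxy nab /Hinj [E1|/sedgeP E1] /Hinj [E2|/sedgeP E2]; first by [].
- exfalso; rewrite -E1 in ab; case: E2 => [[E3 E4]|[E3 E4]]; rewrite E3 in xy; rewrite E4 in ab.
  + exact: (tri3 HF xy ab H0).
  + exact: (tri3 HF ab xy H0).
- exfalso; rewrite -E2 in ab; case: E1 => [[E3 E4]|[E3 E4]]; rewrite E3 in xy; rewrite E4 in ab.
  + exact: (tri3 HF H0 xy ab).
  + exact: (tri3 HF H0 ab xy).
- exfalso; case: E1 => [[E3 E4]|[E3 E4]]; case: E2 => [[E5 E6]|[E5 E6]].
  + by rewrite E3 E5 (adj_irr HF) in xy.
  + by rewrite E3 E5 sedge_refl in nxy.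
  + by rewrite E3 E5 sedge_refl2 in nxy.
  + by rewrite E3 E5 (adj_irr HF) in xy.
Qed.

Lemma c_adj_img {x y : V} : adj F x y -> ~~ sedge _ x y u0 v0 -> adj G (f x) (f y).
Proof. by move=> xy nxy; apply/Hadj; exists x, y. Qed.

Lemma c_inj_off {x z : V} : z != u0 -> z != v0 -> f x = f z -> x = z.
Proof.
move=> zu zv /Hinj [//|/sedgeP [[_ E]|[_ E]]]; by rewrite E eqxx in zu zv.
Qed.

Lemma c_side {u v : V} : adj F u v -> ~~ sedge _ u v u0 v0 ->
  side G (f u) (f v) = side F u v.
Proof.
move=> uv nuv; apply/setP => i; rewrite !inE Hlab.
have nuv1 : ~~ sedge _ u0 v0 u v by rewrite sedge_swap.
have nuv2 : ~~ sedge _ v0 u0 u v by rewrite sedgeC sedge_swap.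
have a1 : adj F v0 u0 by rewrite (adj_sym HF).
apply/idP/idP.
- move=> H.
  have Hst : forall x y', connect (adjm F u v) u x -> adjm G (f u) (f v) (f x) y' ->
      exists y, f y = y' /\ connect (adjm F u v) x y.
    move=> x y' _ /andP [/Hadj [x1 [y1 [fx1 fy1 xy1 nxy1]]] ne].
    exists y1; split => //.
    have s1 : adjm F u v x1 y1.
      rewrite /adjm xy1 /=; apply: contra ne => /sedgeP [[E1 E2]|[E1 E2]];
        by rewrite -fx1 -fy1 E1 E2 ?sedge_refl ?sedge_refl2.
    case: (Hinj fx1) => [E |/sedgeP Ex]; first by rewrite -E; apply: connect1.
    apply: (connect_trans _ (connect1 s1)); apply: connect1; rewrite /adjm.
    case: Ex => [[E1 E2]|[E1 E2]]; by rewrite E1 E2 ?H0 ?a1.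
  have [y [fy cy]] := @connect_lift _ _ (adjm F u v) _ f u _ Hst H.
  case: (Hinj fy) => [<- //|/sedgeP Ey].
  apply: connect_trans cy (connect1 _); rewrite /adjm.
  case: Ey => [[E1 E2]|[E1 E2]]; by rewrite E1 E2 ?H0 ?a1.
- apply: connect_map => x y _ /andP [xy nxy].
  case: (boolP (sedge _ x y u0 v0)) => [/sedgeP [[-> ->]|[-> ->]]|n0]; first by left.
    by left.
  right; rewrite /adjm (c_adj_img xy n0) /=.
  apply/negP => /sedgeP [[E1 E2]|[E1 E2]].
  + have [E3 E4] := c_pairinj xy uv n0 nuv E1 E2; subst; by rewrite sedge_refl in nxy.
  + have vu : adj F v u by rewrite (adj_sym HF).
    have nvu : ~~ sedge _ v u u0 v0 by rewrite sedgeC.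
    have [E3 E4] := c_pairinj xy vu n0 nvu E1 E2.
    subst; by rewrite sedge_refl2 in nxy.
Qed.

Lemma c_adj_off {z y : V} : z != u0 -> z != v0 -> y != u0 -> y != v0 ->
  adj G (f z) (f y) = adj F z y.
Proof.
move=> zu zv yu yv; apply/idP/idP.
- case/Hadj => [x1 [y1 [fx fy xy _]]].
  by rewrite -(c_inj_off zu zv fx) -(c_inj_off yu yv fy).
- move=> zy; apply: c_adj_img zy _.
  apply/negP => /sedgeP [[E _]|[E _]]; by rewrite E eqxx in zu zv.
Qed.

Lemma c_nbr_off {z : V} {y'} : z != u0 -> z != v0 -> adj G (f z) y' ->
  exists y, f y = y' /\ adj F z y.
Proof.
move=> zu zv /Hadj [x1 [y1 [fx fy xy _]]]; exists y1; split => //.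
by rewrite -(c_inj_off zu zv fx).
Qed.

Lemma c_nbr_m {y'} : adj G (f u0) y' ->
  exists y, f y = y' /\ ((adj F u0 y /\ y != v0) \/ (adj F v0 y /\ y != u0)).
Proof.
move=> /Hadj [x1 [y1 [fx fy xy nxy]]]; exists y1; split => //.
case: (Hinj fx) => [E|/sedgeP [[E1 E2]|[E1 E2]]].
- left; rewrite -E xy; split => //; apply/negP => /eqP E'.
  by rewrite E E' sedge_refl in nxy.
- by move: (adj_neq HF H0); rewrite E2 eqxx.
- right; rewrite -E1 xy; split => //; apply/negP => /eqP E'.
  by rewrite E1 E' sedge_refl2 in nxy.
Qed.

Lemma c_adj_m1 {y : V} : adj F u0 y -> y != v0 -> adj G (f u0) (f y).
Proof.
move=> uy yv; apply: c_adj_img uy _; apply/negP => /sedgeP [[_ E]|[E _]].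
- by rewrite E eqxx in yv.
- by move: (adj_neq HF H0); rewrite E eqxx.
Qed.

Lemma c_adj_m2 {y : V} : adj F v0 y -> y != u0 -> adj G (f u0) (f y).
Proof.
move=> vy yu; rewrite Huv; apply: c_adj_img vy _; apply/negP => /sedgeP [[E _]|[_ E]].
- by move: (adj_neq HF H0); rewrite E eqxx.
- by rewrite E eqxx in yu.
Qed.

End Contr.

Set Implicit Arguments.

Lemma card4 (T : finType) (A : {set T}) (a b c d : T) :
  a \in A -> b \in A -> c \in A -> d \in A ->
  a != b -> a != c -> a != d -> b != c -> b != d -> c != d -> 3 < #|A|.
Proof.
move=> aA bA cA dA ab ac ad bc bd cd.
rewrite (cardsD1 a A) aA add1n ltnS; apply/card_gt2P.
exists b, c, d; rewrite !inE ![_ == a]eq_sym ab ac ad bA cA dA bc cd eq_sym bd.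
by split.
Qed.

Lemma memb3 (T : finType) (A : {set T}) (a b c y : T) :
  #|A| <= 3 -> a \in A -> b \in A -> c \in A ->
  a != b -> a != c -> b != c -> y \in A -> [\/ y = a, y = b | y = c].
Proof.
move=> cA aA bA cA' ab ac bc yA.
case: (eqVneq y a) => [->|ya]; first by constructor 1.
case: (eqVneq y b) => [->|yb]; first by constructor 2.
case: (eqVneq y c) => [->|yc]; first by constructor 3.
have := card4 aA bA cA' yA ab ac _ bc _ _; rewrite eq_sym ya eq_sym yb eq_sym yc.
by move=> /(_ erefl erefl erefl); rewrite ltnNge cA.
Qed.

Section MT.
Variable n : nat.
Variable F : xforest n.
Hypothesis HM : is_maxtree F.
Local Notation V := 'I_(nv F).

Lemma mt_deg (z : V) : deg F z <= 3.
Proof.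
case: HM => _ _ _ Hl Hu.
case: (boolP (labeled F z)) => [lz|nz]; last by rewrite Hu.
by move: lz; rewrite Hl /leaf => /eqP ->.
Qed.

Lemma mt_unlab {z a b : V} : adj F z a -> adj F z b -> a != b -> ~~ labeled F z.
Proof.
move=> za zb ab; case: HM => _ _ _ Hl _; rewrite Hl /leaf.
have : 1 < deg F z by apply/card_gt1P; exists a, b; rewrite !inE za zb ab.
by case: (deg F z) => [|[|]].
Qed.

Lemma mt_deg3 {z : V} : ~~ labeled F z -> deg F z = 3.
Proof. by case: HM => _ _ _ _ Hu; apply: Hu. Qed.

Lemma mt_nbr3 {z a b c y : V} : adj F z a -> adj F z b -> adj F z c ->
  a != b -> a != c -> b != c -> adj F z y -> [\/ y = a, y = b | y = c].
Proof.
move=> za zb zc ab ac bc zy.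
by apply: (memb3 (A := [set y | adj F z y])) => //; rewrite ?inE // -/(deg F z) mt_deg.
Qed.

Lemma mt_nbr4 {z a b c d : V} : adj F z a -> adj F z b -> adj F z c -> adj F z d ->
  a != b -> a != c -> a != d -> b != c -> b != d -> c != d -> False.
Proof.
move=> za zb zc zd ab ac ad bc bd cd.
have := card4 (A := [set y | adj F z y]) _ _ _ _ ab ac ad bc bd cd.
by rewrite !inE za zb zc zd -/(deg F z) ltnNge mt_deg => /(_ erefl erefl erefl erefl).
Qed.

Lemma mt_nbr2 {z a : V} : ~~ labeled F z -> adj F z a ->
  exists b c, [/\ adj F z b, adj F z c, b != c, b != a & c != a].
Proof.
move=> nl za; have := mt_deg3 nl; rewrite /deg (cardsD1 a) inE za add1n => [[]] H2.
have : 1 < #|[set y | adj F z y] :\ a| by rewrite H2.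
case/card_gt1P => b [c [bA cA bc]]; move: bA cA; rewrite !inE => /andP[ba zb] /andP[ca zc].
by exists b, c.
Qed.

End MT.

Set Implicit Arguments.

Definition contr_hyps n (F G : xforest n) (u0 v0 : 'I_(nv F)) (f : 'I_(nv F) -> 'I_(nv G)) :=
  adj F u0 v0 /\ [/\ (forall y, exists x, f x = y), f u0 = f v0,
      (forall x y, f x = f y -> x = y \/ sedge _ x y u0 v0),
      (forall i, lab G i = f (lab F i)) &
      (forall x' y', adj G x' y' <->
         exists x y, [/\ f x = x', f y = y', adj F x y & ~~ sedge _ x y u0 v0])].

Lemma contract_hyps n (F G : xforest n) u0 v0 :
  contract_on F G u0 v0 -> exists f, contr_hyps F G u0 v0 f.
Proof. by case=> H [f [*]]; exists f; split. Qed.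

Lemma contr_hyps_sym n (F G : xforest n) u0 v0 f :
  contr_hyps F G u0 v0 f -> sg F -> contr_hyps F G v0 u0 f.
Proof.
move=> [H0 [Hs Huv Hinj Hlab Hadj]] HF; split; last split => //.
- by rewrite (adj_sym HF).
- by move=> x y /Hinj; rewrite sedgeC2.
- move=> x' y'; split => [/Hadj [x [y [? ? ? ?]]]|[x [y [? ? ? ?]]]].
    by exists x, y; split => //; rewrite sedgeC2.
  by apply/Hadj; exists x, y; split => //; rewrite sedgeC2.
Qed.

Lemma nse (T : eqType) (u v a b : T) : u != a -> u != b -> ~~ sedge _ u v a b.
Proof. by move=> ua ub; apply/negP => /sedgeP [[E _]|[E _]]; rewrite E eqxx in ua ub. Qed.

Section CH.
Variable n : nat.
Variables F G : xforest n.
Variables u0 v0 : 'I_(nv F).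
Variable f : 'I_(nv F) -> 'I_(nv G).
Hypothesis H : contr_hyps F G u0 v0 f.
Hypothesis HF : sg F.

Lemma ch_inj_off {x z} : z != u0 -> z != v0 -> f x = f z -> x = z.
Proof. case: H => H0 [Hs Huv Hinj Hlab Hadj]; exact: (c_inj_off _ _ _ _ _ Hinj). Qed.
Lemma ch_adj_off {z y} : z != u0 -> z != v0 -> y != u0 -> y != v0 ->
  adj G (f z) (f y) = adj F z y.
Proof. case: H => H0 [Hs Huv Hinj Hlab Hadj]; exact: (c_adj_off _ _ _ _ _ Hinj Hadj). Qed.
Lemma ch_nbr_off {z y'} : z != u0 -> z != v0 -> adj G (f z) y' ->
  exists y, f y = y' /\ adj F z y.
Proof. case: H => H0 [Hs Huv Hinj Hlab Hadj]; exact: (c_nbr_off _ _ _ _ _ Hinj Hadj). Qed.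
Lemma ch_nbr_m {y'} : adj G (f u0) y' ->
  exists y, f y = y' /\ ((adj F u0 y /\ y != v0) \/ (adj F v0 y /\ y != u0)).
Proof. case: H => H0 [Hs Huv Hinj Hlab Hadj]; exact: (c_nbr_m _ HF _ _ _ H0 Hinj Hadj). Qed.
Lemma ch_adj_m1 {y} : adj F u0 y -> y != v0 -> adj G (f u0) (f y).
Proof. case: H => H0 [Hs Huv Hinj Hlab Hadj]; exact: (c_adj_m1 _ HF _ _ _ H0 Hadj). Qed.
Lemma ch_adj_m2 {y} : adj F v0 y -> y != u0 -> adj G (f u0) (f y).
Proof. case: H => H0 [Hs Huv Hinj Hlab Hadj]; exact: (c_adj_m2 _ HF _ _ _ H0 Huv Hadj). Qed.
Lemma ch_side {u v} : adj F u v -> ~~ sedge _ u v u0 v0 -> side G (f u) (f v) = side F u v.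
Proof. case: H => H0 [Hs Huv Hinj Hlab Hadj]; exact: (c_side _ HF _ _ _ H0 Huv Hinj Hlab Hadj). Qed.
Lemma ch_adj_img {x y} : adj F x y -> ~~ sedge _ x y u0 v0 -> adj G (f x) (f y).
Proof. case: H => H0 [Hs Huv Hinj Hlab Hadj]; exact: (c_adj_img _ _ _ _ _ Hadj). Qed.
Lemma ch_lift {x' y'} : adj G x' y' ->
  exists x y, [/\ f x = x', f y = y', adj F x y & ~~ sedge _ x y u0 v0].
Proof. by case: H => H0 [Hs Huv Hinj Hlab Hadj] /Hadj. Qed.
Lemma ch_merged {z} : f z = f u0 -> z = u0 \/ z = v0.
Proof.
case: H => H0 [Hs Huv Hinj Hlab Hadj] /Hinj [->|/sedgeP [[E _]|[E _]]]; by auto.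
Qed.
End CH.

Section Exp.
Variable n : nat.
Variables Ci Fj Cj : xforest n.
Hypothesis Mi : is_maxtree Ci.
Hypothesis Mj : is_maxtree Cj.
Let Si : sg Ci := maxtree_sg _ _ Mi.
Let Sj : sg Cj := maxtree_sg _ _ Mj.
Variable x : 'I_n.
Variables p q1 q2 r1 r2 : 'I_(nv Ci).
Local Notation xl := (lab Ci x).
Hypothesis pxl : adj Ci p xl.
Hypothesis pq1 : adj Ci p q1.
Hypothesis pq2 : adj Ci p q2.
Hypothesis q1r1 : adj Ci q1 r1.
Hypothesis q1r2 : adj Ci q1 r2.
Hypothesis q12 : q1 != q2.
Hypothesis r12 : r1 != r2.
Hypothesis r1p : r1 != p.
Hypothesis r2p : r2 != p.
Hypothesis xlq1 : xl != q1.
Hypothesis xlq2 : xl != q2.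
Variable psi : 'I_(nv Ci) -> 'I_(nv Fj).
Hypothesis Hpsi : contr_hyps Ci Fj p q1 psi.
Hypothesis niso : ~ xiso Ci Cj.
Variables a b c d : 'I_n.
Hypothesis ha : a \in side Ci r1 q1.
Hypothesis hb : b \in side Ci r2 q1.
Hypothesis hc : c \in side Ci q2 p.
Hypothesis hd : d \in side Ci q2 p.

Lemma plab : ~~ labeled Ci p.
Proof. apply: (mt_unlab Mi pxl pq1); by rewrite xlq1. Qed.
Lemma q1lab : ~~ labeled Ci q1.
Proof. apply: (mt_unlab Mi q1r1 q1r2); by rewrite r12. Qed.

Lemma neq_of_adj {u v : 'I_(nv Ci)} : adj Ci u v -> (v == u) = false.
Proof. by move/(adj_neq Si); rewrite eq_sym => /negbTE. Qed.

Lemma xlp : xl != p. Proof. by rewrite neq_of_adj. Qed.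
Lemma q2p : q2 != p. Proof. by rewrite neq_of_adj. Qed.
Lemma q2q1 : q2 != q1. Proof. by rewrite eq_sym. Qed.
Lemma r1q1 : r1 != q1. Proof. by rewrite neq_of_adj. Qed.
Lemma r2q1 : r2 != q1. Proof. by rewrite neq_of_adj. Qed.
Lemma xlr1 : xl != r1.
Proof. apply/eqP => E; have h := q1r1; rewrite -E in h; exact: (tri3 Si pq1 pxl h). Qed.
Lemma xlr2 : xl != r2.
Proof. apply/eqP => E; have h := q1r2; rewrite -E in h; exact: (tri3 Si pq1 pxl h). Qed.
Lemma q2r1 : q2 != r1.
Proof. apply/eqP => E; have h := q1r1; rewrite -E in h; exact: (tri3 Si pq1 pq2 h). Qed.
Lemma q2r2 : q2 != r2.
Proof. apply/eqP => E; have h := q1r2; rewrite -E in h; exact: (tri3 Si pq1 pq2 h). Qed.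

Lemma psi_inj {u v : 'I_(nv Ci)} : v != p -> v != q1 -> u != v -> psi u != psi v.
Proof.
move=> vp vq uv; apply/eqP => /(ch_inj_off Hpsi vp vq) E; by rewrite E eqxx in uv.
Qed.

Lemma psi_adj_p {y : 'I_(nv Ci)} : adj Ci p y -> y != q1 -> adj Fj (psi p) (psi y).
Proof. exact: (ch_adj_m1 Hpsi Si). Qed.
Lemma psi_adj_q {y : 'I_(nv Ci)} : adj Ci q1 y -> y != p -> adj Fj (psi p) (psi y).
Proof. exact: (ch_adj_m2 Hpsi Si). Qed.

Lemma psi_side {u v : 'I_(nv Ci)} : adj Ci u v -> ~~ sedge _ u v p q1 ->
  side Fj (psi u) (psi v) = side Ci u v.
Proof. exact: (ch_side Hpsi Si). Qed.

Lemma nse_of {u v : 'I_(nv Ci)} : u != p -> u != q1 -> ~~ sedge _ u v p q1.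
Proof. by move=> up uq; apply/negP => /sedgeP [[E _]|[E _]]; rewrite E eqxx in up uq. Qed.

Lemma x_side1 : x \in side Ci xl p.
Proof. by rewrite inE. Qed.

Lemma a_side_pq2 : a \in side Ci p q2.
Proof.
have := subsetP (side_incl Si pq2 pq1 q12) a; apply.
have q1p : adj Ci q1 p by rewrite (adj_sym Si).
exact: (subsetP (side_incl Si q1p q1r1 r1p) a ha).
Qed.

Lemma x_side_pq2 : x \in side Ci p q2.
Proof.
rewrite inE; apply: connect1; rewrite /adjm pxl /=.
apply/negP => /sedgeP [[_ E]|[E _]]; first by move: xlq2; rewrite E eqxx.
by move: (adj_neq Si pq2); rewrite E eqxx.
Qed.

Section Core.
Variables s t : 'I_(nv Cj).
Variable phi : 'I_(nv Cj) -> 'I_(nv Fj).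
Hypothesis Hphi : contr_hyps Cj Fj s t phi.
Hypothesis hws : phi s = psi p.

Lemma st : adj Cj s t. Proof. by case: Hphi. Qed.
Lemma hwt : phi t = psi p. Proof. by case: Hphi => _ [_ <- _ _ _]. Qed.
Lemma hpq : psi p = psi q1. Proof. by case: Hpsi => _ [_ -> _ _ _]. Qed.

Lemma side_js {y} : adj Cj y s -> y != t -> side Cj y s = side Fj (phi y) (psi p).
Proof.
move=> ys yt; rewrite -hws (ch_side Hphi Sj ys) //; apply: nse => //.
exact: (adj_neq Sj ys).
Qed.
Lemma side_jt {y} : adj Cj y t -> y != s -> side Cj y t = side Fj (phi y) (psi p).
Proof.
move=> yt ys; rewrite -hwt (ch_side Hphi Sj yt) //; apply: nse => //.
exact: (adj_neq Sj yt).
Qed.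
Lemma side_ip {y} : adj Ci y p -> y != q1 -> side Fj (psi y) (psi p) = side Ci y p.
Proof. move=> yp yq; rewrite (psi_side yp) //; apply: nse => //; exact: (adj_neq Si yp). Qed.
Lemma side_iq {y} : adj Ci y q1 -> y != p -> side Fj (psi y) (psi p) = side Ci y q1.
Proof. move=> yp yq; rewrite hpq (psi_side yp) //; apply: nse => //; exact: (adj_neq Si yp). Qed.

Lemma qcase (y1 y2 y3 y4 : 'I_(nv Cj)) (r r' : 'I_(nv Ci)) (ar ar' : 'I_n) :
  adj Ci q1 r -> adj Ci q1 r' -> r != p -> r' != p ->
  ar \in side Ci r q1 -> ar' \in side Ci r' q1 ->
  adj Cj s y1 -> y1 != t -> phi y1 = psi xl ->
  adj Cj s y3 -> y3 != t -> phi y3 = psi r ->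
  adj Cj t y2 -> y2 != s -> phi y2 = psi q2 ->
  adj Cj t y4 -> y4 != s -> phi y4 = psi r' ->
  [/\ QQ Cj s t x ar ar' c, QQ Cj y2 t c d x a & ~~ sedge _ s t y2 t].
Proof.
move=> q1r q1r' rp r'p har har' sy1 y1t hy1 sy3 y3t hy3 ty2 y2s hy2 ty4 y4s hy4.
have ts : adj Cj t s by rewrite (adj_sym Sj) st.
have y1s' : adj Cj y1 s by rewrite (adj_sym Sj).
have y3s' : adj Cj y3 s by rewrite (adj_sym Sj).
have y2t' : adj Cj y2 t by rewrite (adj_sym Sj).
have y4t' : adj Cj y4 t by rewrite (adj_sym Sj).
have rq1 : adj Ci r q1 by rewrite (adj_sym Si).
have r'q1 : adj Ci r' q1 by rewrite (adj_sym Si).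
have xlp' : adj Ci xl p by rewrite (adj_sym Si).
have q2p' : adj Ci q2 p by rewrite (adj_sym Si).
have e2 : side Cj y2 t = side Ci q2 p by rewrite (side_jt y2t' y2s) hy2 side_ip // q2q1.
have e2' : side Cj t y2 = side Ci p q2.
  have nt : ~~ sedge _ t y2 s t.
    by rewrite sedgeC; apply: nse => //; move: (adj_neq Sj ty2); rewrite eq_sym.
  rewrite -(ch_side Hphi Sj ty2 nt) hwt hy2 psi_side //; apply/negP => /sedgeP [[_ E]|[E _]]; first by move: q2q1; rewrite E eqxx.
  by move: (adj_neq Si pq1); rewrite E eqxx.
split.
- split; first exact: st.
  + apply: (subsetP (side_incl Sj st sy1 y1t)).
    by rewrite (side_js y1s' y1t) hy1 side_ip // x_side1.
  + apply: (subsetP (side_incl Sj st sy3 y3t)).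
    by rewrite (side_js y3s' y3t) hy3 side_iq.
  + apply: (subsetP (side_incl Sj ts ty4 y4s)).
    by rewrite (side_jt y4t' y4s) hy4 side_iq.
  + by apply: (subsetP (side_incl Sj ts ty2 y2s)); rewrite e2.
- split => //; rewrite ?e2 ?e2' //.
  + exact: x_side_pq2.
  + exact: a_side_pq2.
- apply: nse; first by rewrite eq_sym.
  by apply: (adj_neq Sj st).
Qed.

Lemma recon (y1 y2 y3 y4 : 'I_(nv Cj)) :
  adj Cj s y1 -> adj Cj s y2 -> adj Cj t y3 -> adj Cj t y4 ->
  phi y1 = psi xl -> phi y2 = psi q2 -> phi y3 = psi r1 -> phi y4 = psi r2 ->
  y1 != y2 -> y3 != y4 -> y1 != t -> y2 != t -> y3 != s -> y4 != s -> xiso Ci Cj.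
Proof.
move=> sy1 sy2 ty3 ty4 hy1 hy2 hy3 hy4 y12 y34 y1t y2t y3s y4s.
have st' := st.
have stn : s != t := adj_neq Sj st'.
have y1s : y1 != s by rewrite eq_sym (adj_neq Sj sy1).
have y2s : y2 != s by rewrite eq_sym (adj_neq Sj sy2).
have y3t : y3 != t by rewrite eq_sym (adj_neq Sj ty3).
have y4t : y4 != t by rewrite eq_sym (adj_neq Sj ty4).
have pq1n : p != q1 := adj_neq Si pq1.
pose pre (y' : 'I_(nv Fj)) := odflt s [pick z | phi z == y'].
have preE : forall y', phi (pre y') = y'.
  move=> y'; rewrite /pre; case: pickP => [z /eqP //|none].
  case: Hphi => _ [Hs _ _ _ _]; case: (Hs y') => z Ez; by move: (none z); rewrite Ez eqxx.
pose preI (y' : 'I_(nv Fj)) := odflt p [pick z | psi z == y'].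
have preIE : forall y', psi (preI y') = y'.
  move=> y'; rewrite /preI; case: pickP => [z /eqP //|none].
  case: Hpsi => _ [Hs _ _ _ _]; case: (Hs y') => z Ez; by move: (none z); rewrite Ez eqxx.
pose g (y : 'I_(nv Ci)) := if y == p then s else if y == q1 then t else pre (psi y).
pose h (z : 'I_(nv Cj)) := if z == s then p else if z == t then q1 else preI (phi z).
have offi : forall y, y != p -> y != q1 -> psi y != psi p.
  move=> y yp yq; apply/eqP => E; case: (ch_merged Hpsi E) => E'; by rewrite E' eqxx in yp yq.
have offj : forall z, z != s -> z != t -> phi z != psi p.
  move=> z zs zt; apply/eqP => E; rewrite -hws in E.
  case: (ch_merged Hphi E) => E'; by rewrite E' eqxx in zs zt.
have gs : forall y, y != p -> y != q1 -> (pre (psi y) != s) && (pre (psi y) != t).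
  move=> y yp yq; apply/andP; split; apply/eqP => E; move: (offi y yp yq);
    by rewrite -(preE (psi y)) E ?hws ?hwt eqxx.
have hs : forall z, z != s -> z != t -> (preI (phi z) != p) && (preI (phi z) != q1).
  move=> z zs zt; apply/andP; split; apply/eqP => E; move: (offj z zs zt);
    by rewrite -(preIE (phi z)) E -?hpq eqxx.
have gE : forall y, y != p -> y != q1 -> g y = pre (psi y).
  by move=> y yp yq; rewrite /g (negbTE yp) (negbTE yq).
have Np : forall y, adj Ci p y -> [\/ y = xl, y = q1 | y = q2].
  move=> y; apply: (mt_nbr3 Mi pxl pq1 pq2) => //.
have Nq : forall y, adj Ci q1 y -> [\/ y = p, y = r1 | y = r2].
  have q1p : adj Ci q1 p by rewrite (adj_sym Si).
  move=> y; apply: (mt_nbr3 Mi q1p q1r1 q1r2) => //; by rewrite eq_sym.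
have Ns : forall z, adj Cj s z -> [\/ z = t, z = y1 | z = y2].
  move=> z; apply: (mt_nbr3 Mj st' sy1 sy2) => //; by rewrite eq_sym.
have Nt : forall z, adj Cj t z -> [\/ z = s, z = y3 | z = y4].
  have ts : adj Cj t s by rewrite (adj_sym Sj).
  move=> z; apply: (mt_nbr3 Mj ts ty3 ty4) => //; by rewrite eq_sym.
have preV : forall z y', z != s -> z != t -> phi z = y' -> pre y' = z.
  move=> z y' zs zt E; apply: (ch_inj_off Hphi zs zt); by rewrite preE.
have psiV : forall y z, z != p -> z != q1 -> psi y = psi z -> y = z.
  move=> y z zp zq E; exact: (ch_inj_off Hpsi zp zq E).
have adjs : forall y, y != p -> y != q1 -> adj Cj s (g y) = adj Ci p y.
  move=> y yp yq; have /andP [g1 g2] := gs y yp yq; rewrite gE //; apply/idP/idP.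
  - case/Ns => E.
    + by rewrite E eqxx in g2.
    + have := preE (psi y); rewrite E hy1 => /esym/psiV; rewrite xlp xlq1 => /(_ erefl erefl) ->.
      exact: pxl.
    + have := preE (psi y); rewrite E hy2 => /esym/psiV; rewrite q2p q2q1 => /(_ erefl erefl) ->.
      exact: pq2.
  - case/Np => E; rewrite E.
    + by rewrite (preV y1) //.
    + by rewrite E eqxx in yq.
    + by rewrite (preV y2) //.
have adjt : forall y, y != p -> y != q1 -> adj Cj t (g y) = adj Ci q1 y.
  move=> y yp yq; have /andP [g1 g2] := gs y yp yq; rewrite gE //; apply/idP/idP.
  - case/Nt => E.
    + by rewrite E eqxx in g1.
    + have := preE (psi y); rewrite E hy3 => /esym/psiV; rewrite r1p r1q1 => /(_ erefl erefl) ->.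
      exact: q1r1.
    + have := preE (psi y); rewrite E hy4 => /esym/psiV; rewrite r2p r2q1 => /(_ erefl erefl) ->.
      exact: q1r2.
  - case/Nq => E; rewrite E.
    + by rewrite E eqxx in yp.
    + by rewrite (preV y3) // hy3.
    + by rewrite (preV y4) // hy4.
have adjo : forall u v, u != p -> u != q1 -> v != p -> v != q1 -> adj Cj (g u) (g v) = adj Ci u v.
  move=> u v up uq vp vq; have /andP [g1 g2] := gs u up uq; have /andP [g3 g4] := gs v vp vq.
  rewrite !gE // -(ch_adj_off Hphi g1 g2 g3 g4) !preE.
  exact: (ch_adj_off Hpsi up uq vp vq).
have gp : g p = s by rewrite /g eqxx.
have qpn : q1 != p by rewrite eq_sym.
have gq : g q1 = t by rewrite /g (negbTE qpn) eqxx.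
have tsn : t != s by rewrite eq_sym.
have hsE : h s = p by rewrite /h eqxx.
have htE : h t = q1 by rewrite /h (negbTE tsn) eqxx.
exists g; split.
- exists h => [y|z].
  + case: (eqVneq y p) => [->|yp]; first by rewrite gp hsE.
    case: (eqVneq y q1) => [->|yq]; first by rewrite gq htE.
    have /andP [g1 g2] := gs y yp yq.
    rewrite gE // /h (negbTE g1) (negbTE g2) preE.
    apply: psiV => //; exact: preIE.
  + case: (eqVneq z s) => [->|zs]; first by rewrite hsE gp.
    case: (eqVneq z t) => [->|zt]; first by rewrite htE gq.
    have /andP [h1 h2] := hs z zs zt.
    rewrite /h (negbTE zs) (negbTE zt) gE // preIE; exact: preV.
- move=> i.
  have lp : lab Ci i != p by apply: contra plab => /eqP E; apply/existsP; exists i; rewrite E.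
  have lq : lab Ci i != q1 by apply: contra q1lab => /eqP E; apply/existsP; exists i; rewrite E.
  have ls : lab Cj i != s.
    apply: contra (mt_unlab Mj sy1 sy2 y12) => /eqP E; apply/existsP; exists i; by rewrite E.
  have lt : lab Cj i != t.
    apply: contra (mt_unlab Mj ty3 ty4 y34) => /eqP E; apply/existsP; exists i; by rewrite E.
  rewrite gE //; symmetry; apply: preV => //.
  case: Hpsi => _ [_ _ _ Hl1 _]; case: Hphi => _ [_ _ _ Hl2 _].
  by rewrite -Hl1 Hl2.
- have ts : adj Cj t s by rewrite (adj_sym Sj).
  have q1p : adj Ci q1 p by rewrite (adj_sym Si).
  move=> u v.
  case: (eqVneq u p) => [->|up]; [|case: (eqVneq u q1) => [->|uq]];
  (case: (eqVneq v p) => [->|vp]; [|case: (eqVneq v q1) => [->|vq]]);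
  rewrite ?gp ?gq ?(adj_irr Sj) ?(adj_irr Si) ?st' ?pq1 ?ts ?q1p ?adjs ?adjt ?adjo //.
  + by rewrite (adj_sym Sj) adjs // (adj_sym Si).
  + by rewrite (adj_sym Sj) adjt // (adj_sym Si).
Qed.

Definition result := exists u1 v1 u2 v2 : 'I_(nv Cj),
  [/\ ~~ sedge _ u1 v1 u2 v2, QQ Cj u1 v1 x a b c \/ QQ Cj u1 v1 x b a c & QQ Cj u2 v2 c d x a].

Lemma core (y1 : 'I_(nv Cj)) : adj Cj s y1 -> y1 != t -> phi y1 = psi xl -> result.
Proof.
move=> sy1 y1t hy1.
have st' := st.
have ts : adj Cj t s by rewrite (adj_sym Sj).
have stn : s != t := adj_neq Sj st'.
have tsn : t != s by rewrite eq_sym.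
have nb : forall y', adj Fj (phi s) y' ->
  exists y, phi y = y' /\ ((adj Cj s y /\ y != t) \/ (adj Cj t y /\ y != s)).
  by move=> y'; apply: (ch_nbr_m Hphi Sj).
have A2 : adj Fj (phi s) (psi q2).
  by rewrite hws; apply: psi_adj_p => //; exact: q2q1.
have [y2 [hy2 S2]] := nb (psi q2) A2.
have A3 : adj Fj (phi s) (psi r1).
  by rewrite hws; apply: psi_adj_q.
have [y3 [hy3 S3]] := nb (psi r1) A3.
have A4 : adj Fj (phi s) (psi r2).
  by rewrite hws; apply: psi_adj_q.
have [y4 [hy4 S4]] := nb (psi r2) A4.
have neq_of : forall u v, phi u != phi v -> u != v by move=> u v; apply: contra => /eqP ->.
have y12 : y1 != y2 by apply: neq_of; rewrite hy1 hy2; apply: psi_inj q2p q2q1 xlq2.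
have y13 : y1 != y3 by apply: neq_of; rewrite hy1 hy3; apply: psi_inj r1p r1q1 xlr1.
have y14 : y1 != y4 by apply: neq_of; rewrite hy1 hy4; apply: psi_inj r2p r2q1 xlr2.
have y23 : y2 != y3 by apply: neq_of; rewrite hy2 hy3; apply: psi_inj r1p r1q1 q2r1.
have y24 : y2 != y4 by apply: neq_of; rewrite hy2 hy4; apply: psi_inj r2p r2q1 q2r2.
have y34 : y3 != y4 by apply: neq_of; rewrite hy3 hy4; apply: psi_inj r2p r2q1 r12.
have ty1 : t != y1 by rewrite eq_sym.
case: S2 => [[s2 n2]|[t2 n2]]; case: S3 => [[s3 n3]|[t3 n3]]; case: S4 => [[s4 n4]|[t4 n4]];
  have tn := fun y (H : adj Cj t y) => adj_neq Sj H;
  have sn := fun y (H : adj Cj s y) => adj_neq Sj H.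
- exfalso; apply: (mt_nbr4 Mj st' sy1 s2 s3) => //; by rewrite eq_sym.
- exfalso; apply: (mt_nbr4 Mj st' sy1 s2 s3) => //; by rewrite eq_sym.
- exfalso; apply: (mt_nbr4 Mj st' sy1 s2 s4) => //; by rewrite eq_sym.
- exfalso; apply: niso; apply: (recon sy1 s2 t3 t4) => //.
- exfalso; apply: (mt_nbr4 Mj st' sy1 s3 s4) => //; by rewrite eq_sym.
- have [Q1 Q2 ne] := qcase q1r1 q1r2 r1p r2p ha hb sy1 y1t hy1 s3 n3 hy3 t2 n2 hy2 t4 n4 hy4.
  by exists s, t, y2, t; split => //; left.
- have [Q1 Q2 ne] := qcase q1r2 q1r1 r2p r1p hb ha sy1 y1t hy1 s4 n4 hy4 t2 n2 hy2 t3 n3 hy3.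
  by exists s, t, y2, t; split => //; right.
- exfalso; apply: (mt_nbr4 Mj ts t2 t3 t4) => //; by rewrite ?tn // eq_sym.
Qed.

End Core.

Lemma expansion (s t : 'I_(nv Cj)) (phi : 'I_(nv Cj) -> 'I_(nv Fj)) :
  contr_hyps Cj Fj s t phi -> result.
Proof.
move=> Hphi.
have hws : phi s = psi p.
  case: (Hphi) => _ [Hs Huv _ _ _]; case: (Hs (psi p)) => z hz.
  case: (eqVneq z s) => [<- //|zs]; case: (eqVneq z t) => [E|zt]; first by rewrite Huv -E.
  exfalso.
  have nb : forall y', adj Fj (phi z) y' -> exists y, phi y = y' /\ adj Cj z y.
    by move=> y'; apply: (ch_nbr_off Hphi zs zt).
  have A1 : adj Fj (phi z) (psi xl) by rewrite hz; apply: psi_adj_p => //.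
  have A2 : adj Fj (phi z) (psi q2) by rewrite hz; apply: psi_adj_p => //; exact: q2q1.
  have A3 : adj Fj (phi z) (psi r1) by rewrite hz; apply: psi_adj_q.
  have A4 : adj Fj (phi z) (psi r2) by rewrite hz; apply: psi_adj_q.
  have [y1 [hy1 z1]] := nb _ A1; have [y2 [hy2 z2]] := nb _ A2.
  have [y3 [hy3 z3]] := nb _ A3; have [y4 [hy4 z4]] := nb _ A4.
  have neq_of : forall u v, phi u != phi v -> u != v by move=> u v; apply: contra => /eqP ->.
  apply: (mt_nbr4 Mj z1 z2 z3 z4); apply: neq_of.
  - by rewrite hy1 hy2; apply: psi_inj q2p q2q1 xlq2.
  - by rewrite hy1 hy3; apply: psi_inj r1p r1q1 xlr1.
  - by rewrite hy1 hy4; apply: psi_inj r2p r2q1 xlr2.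
  - by rewrite hy2 hy3; apply: psi_inj r1p r1q1 q2r1.
  - by rewrite hy2 hy4; apply: psi_inj r2p r2q1 q2r2.
  - by rewrite hy3 hy4; apply: psi_inj r2p r2q1 r12.
have A1 : adj Fj (phi s) (psi xl) by rewrite hws; apply: psi_adj_p => //.
have [y1 [hy1 [[sy1 y1t]|[ty1 y1s]]]] := ch_nbr_m Hphi Sj A1.
- exact: (core Hphi hws y1 sy1 y1t hy1).
- have Hphi' := contr_hyps_sym Hphi Sj.
  have hwt : phi t = psi p by case: (Hphi) => _ [_ <- _ _ _].
  exact: (core Hphi' hwt y1 ty1 y1s hy1).
Qed.

End Exp.

Set Implicit Arguments.

Lemma QQ12 n (F : xforest n) u v i j k l : QQ F u v i j k l -> QQ F u v j i k l.
Proof. by case. Qed.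

Lemma sedge_tr (T : eqType) (a b c d e g : T) :
  sedge _ a b e g -> sedge _ c d e g -> sedge _ a b c d.
Proof.
move=> /sedgeP [[-> ->]|[-> ->]] /sedgeP [[-> ->]|[-> ->]];
  by rewrite ?sedge_refl ?sedge_refl2.
Qed.

Section Final.
Variable n : nat.
Variables Cj Ck G : xforest n.
Hypothesis Mj : is_maxtree Cj.
Hypothesis Mk : is_maxtree Ck.
Variables uj vj : 'I_(nv Cj).
Variables uk vk : 'I_(nv Ck).
Variable chj : 'I_(nv Cj) -> 'I_(nv G).
Variable chk : 'I_(nv Ck) -> 'I_(nv G).
Hypothesis Hj : contr_hyps Cj G uj vj chj.
Hypothesis Hk : contr_hyps Ck G uk vk chk.
Let Sj : sg Cj := maxtree_sg _ _ Mj.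
Let Sk : sg Ck := maxtree_sg _ _ Mk.

Lemma transfer u v i j k l : QQ Cj u v i j k l -> ~~ sedge _ u v uj vj ->
  exists u' v', QQ Ck u' v' i j k l.
Proof.
case=> uv hi hj hk hl ne.
have vu : adj Cj v u by rewrite (adj_sym Sj).
have ne' : ~~ sedge _ v u uj vj by rewrite sedgeC.
have A := ch_adj_img Hj uv ne.
have [z1 [z2 [e1 e2 z12 nz]]] := ch_lift Hk A.
have z21 : adj Ck z2 z1 by rewrite (adj_sym Sk).
have nz' : ~~ sedge _ z2 z1 uk vk by rewrite sedgeC.
have E1 : side Ck z1 z2 = side Cj u v by rewrite -(ch_side Hk Sk z12 nz) e1 e2 (ch_side Hj Sj uv ne).
have E2 : side Ck z2 z1 = side Cj v u by rewrite -(ch_side Hk Sk z21 nz') e1 e2 (ch_side Hj Sj vu ne').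
by exists z1, z2; split; rewrite ?E1 ?E2.
Qed.

Lemma final_contra (x a b c d : 'I_n) (u1 v1 u2 v2 : 'I_(nv Cj)) (w1 z1 w2 z2 : 'I_(nv Ck)) :
  ~~ sedge _ u1 v1 u2 v2 -> QQ Cj u1 v1 x a b c \/ QQ Cj u1 v1 x b a c -> QQ Cj u2 v2 c d x a ->
  QQ Ck w1 z1 x c d a \/ QQ Ck w1 z1 x d c a -> QQ Ck w2 z2 a b x c -> False.
Proof.
move=> ne E1 E2 K1 K2.
have s1 : sedge _ u1 v1 uj vj.
  apply/negPn/negP => ne1.
  case: E1 => [Q|Q]; have [u' [v' Q']] := transfer Q ne1.
  - exact: (excl Sk K2 (QQ12 Q')).
  - exact: (excl Sk (QQ12 K2) (QQ12 Q')).
have s2 : sedge _ u2 v2 uj vj.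
  apply/negPn/negP => ne2.
  have [u' [v' Q']] := transfer E2 ne2.
  case: K1 => Q.
  - exact: (excl Sk Q' (QQ12 Q)).
  - exact: (excl Sk (QQ12 Q') (QQ12 Q)).
by rewrite (sedge_tr _ _ _ _ _ _ _ s1 s2) in ne.
Qed.

End Final.

Set Implicit Arguments.

Lemma exists_contr n (F : xforest n) (u v : 'I_(nv F)) : u != v ->
  exists (G : xforest n) (f : 'I_(nv F) -> 'I_(nv G)), (adj F u v -> contr_hyps F G u v f).
Proof.
move=> nuv.
case: (unliftP v u) => [u' Eu|Eu]; last by rewrite Eu eqxx in nuv.
pose f (y : 'I_(nv F)) : 'I_(nv F).-1 := odflt u' (unlift v y).
pose G := @XForest n (nv F).-1 (fun x' y' => [exists x, exists y,
   (f x == x') && (f y == y') && adj F x y && ~~ sedge _ x y u v]) (fun i => f (lab F i)).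
exists G, f => uv; split => //; split.
- move=> y; exists (lift v y); by rewrite /f liftK.
- by rewrite /f Eu liftK unlift_none.
- move=> x y; rewrite /f; case: (unliftP v x) => [x1 ->|->]; case: (unliftP v y) => [y1 ->|->];
    rewrite ?liftK ?unlift_none /= => E.
  + by left; rewrite E.
  + by right; rewrite E -Eu sedge_refl.
  + by right; rewrite -E -Eu sedge_refl2.
  + by left.
- by [].
- move=> x' y'; split.
  + move=> /existsP [x /existsP [y /andP[/andP[/andP[/eqP fx /eqP fy] xy] ne]]].
    by exists x, y.
  + move=> [x [y [fx fy xy ne]]]; apply/existsP; exists x; apply/existsP; exists y.
    by rewrite fx fy !eqxx xy ne.
Qed.

Ltac kl := match goal with
  | E : ?a = ?b, H : is_true (?a != ?b) |- _ => by rewrite E eqxx in H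
  | E : ?a = ?b, H : is_true (?b != ?a) |- _ => by rewrite E eqxx in H
  end.

Lemma swap_contr n (F G : xforest n) (u v b c : 'I_(nv F)) f : sg F ->
  contr_hyps F G u v f -> adj F u b -> adj F v c -> b != v -> c != u ->
  contr_hyps (nni_swap F u v b c) G u v f.
Proof.
move=> HF [uv [Hs Huv Hinj Hlab Hadj]] ub vc bv cu.
have unv : u != v := adj_neq HF uv.
have vnu : v != u by rewrite eq_sym.
have bnu : b != u by rewrite eq_sym (adj_neq HF ub).
have cnv : c != v by rewrite eq_sym (adj_neq HF vc).
have bu : adj F b u by rewrite (adj_sym HF).
have cv : adj F c v by rewrite (adj_sym HF).
have ne1 : forall y, ~~ sedge _ v y u v -> True by [].
split; last split => //.
- rewrite /nni_swap /= uv /=.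
  apply/orP; left; apply/orP; left; apply/andP; split.
  + apply/negP => /sedgeP [[_ E]|[E _]]; kl.
  + apply/negP => /sedgeP [[E _]|[E _]]; kl.
- move=> x' y'; split.
  + move=> /Hadj [x [y [fx fy xy ne]]].
    case: (boolP (sedge _ x y u b)) => [/sedgeP [[E1 E2]|[E1 E2]]|nb].
      * exists v, b; rewrite -Huv -fx -fy E1 E2; split => //.
          by rewrite /nni_swap /= sedge_refl !orbT.
        apply/negP => /sedgeP [[E _]|[_ E]]; kl.
      * exists b, v; rewrite -Huv -fx -fy E1 E2; split => //.
          by rewrite /nni_swap /= sedge_refl2 !orbT.
        apply/negP => /sedgeP [[E _]|[E _]]; kl.
    case: (boolP (sedge _ x y v c)) => [/sedgeP [[E1 E2]|[E1 E2]]|nc].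
      * exists u, c; rewrite Huv -fx -fy E1 E2; split => //.
          by rewrite /nni_swap /= sedge_refl orbT.
        apply/negP => /sedgeP [[_ E]|[E _]]; kl.
      * exists c, u; rewrite Huv -fx -fy E1 E2; split => //.
          by rewrite /nni_swap /= sedge_refl2 orbT.
        apply/negP => /sedgeP [[E _]|[E _]]; kl.
    exists x, y; split => //; by rewrite /nni_swap /= xy nb nc.
  + move=> [x [y [fx fy]]]; rewrite /nni_swap /= => H ne.
    case/orP: H => [/orP [/andP [/andP [xy _] _]|H]|H].
    * by apply/Hadj; exists x, y.
    * move: H => /sedgeP [[E1 E2]|[E1 E2]]; apply/Hadj.
      - exists v, c; rewrite -Huv -fx -fy E1 E2; split => //.
        apply/negP => /sedgeP [[E _]|[_ E]]; kl.
      - exists c, v; rewrite -Huv -fx -fy E1 E2; split => //.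
        apply/negP => /sedgeP [[E _]|[E _]]; kl.
    * move: H => /sedgeP [[E1 E2]|[E1 E2]]; apply/Hadj.
      - exists u, b; rewrite Huv -fx -fy E1 E2; split => //.
        apply/negP => /sedgeP [[_ E]|[E _]]; kl.
      - exists b, u; rewrite Huv -fx -fy E1 E2; split => //.
        apply/negP => /sedgeP [[E _]|[E _]]; kl.
Qed.

Lemma iso_contr n (A B G : xforest n) (u v : 'I_(nv A)) f :
  xiso A B -> contr_hyps A G u v f ->
  exists (u' v' : 'I_(nv B)) f', contr_hyps B G u' v' f'.
Proof.
move=> [h [[hi hK hiK] Hl Ha]] [uv [Hs Huv Hinj Hlab Hadj]].
have hinj : injective h := can_inj hK.
have sE : forall x y a b, sedge _ (h x) (h y) (h a) (h b) = sedge _ x y a b.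
  by move=> x y a b; rewrite /sedge !(inj_eq hinj).
exists (h u), (h v), (fun y => f (hi y)); split; first by rewrite Ha.
split.
- move=> y; case: (Hs y) => x <-; exists (h x); by rewrite hK.
- by rewrite !hK.
- move=> x y /Hinj [E|]; first by left; rewrite -(hiK x) E hiK.
  by rewrite -sE !hiK; right.
- by move=> i; rewrite Hl hK.
- move=> x' y'; split.
  + move=> /Hadj [x [y [fx fy xy ne]]]; exists (h x), (h y); by rewrite !hK Ha sE.
  + move=> [x [y [fx fy xy ne]]]; apply/Hadj; exists (hi x), (hi y); split => //.
    * by rewrite -Ha !hiK.
    * by rewrite -sE !hiK.
Qed.

Lemma no_del n (C : xforest n) (u v : 'I_(nv C)) : is_maxtree C -> 2 < n ->
  adj C u v -> safe_del C u v -> False.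
Proof.
move=> M n2 uv [su sv].
have lab3 : forall z, ~~ (3 < deg C z) by move=> z; rewrite -leqNgt mt_deg.
move: su sv; rewrite (negbTE (lab3 u)) (negbTE (lab3 v)) !orbF => lu lv.
case: (M) => HX Hc Hi Hl _.
have S := maxtree_sg _ _ M.
have one : forall z y, labeled C z -> adj C z y -> forall y', adj C z y' -> y' = y.
  move=> z y lz zy y' zy'; apply/eqP; apply/negPn/negP => ne.
  have : 1 < deg C z by apply/card_gt1P; exists y', y; rewrite !inE zy zy' ne.
  by move: lz; rewrite Hl /leaf => /eqP ->.
have vu : adj C v u by rewrite (adj_sym S).
have cl : forall z, connect (adj C) u z -> z = u \/ z = v.
  move=> z /connectP [p pth ->].
  elim: p u v uv vu lu lv pth => [|y p IH] u' v' uv' vu' lu' lv' /=; first by left.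
  case/andP => u'y pth.
  have Ey := one _ _ lu' uv' _ u'y; subst y.
  case: (IH v' u' vu' uv' lv' lu' pth) => ->; by auto.
have n0 : 0 < n by apply: leq_trans n2.
have n1 : 1 < n by apply: leq_trans n2.
pose i0 : 'I_n := Ordinal n0.
pose i1 : 'I_n := Ordinal n1.
pose i2 : 'I_n := Ordinal n2.
have inj3 : forall i j : 'I_n, lab C i = lab C j -> i = j by move=> i j /Hi.
case: (cl (lab C i0) (Hc _ _)) => E0; case: (cl (lab C i1) (Hc _ _)) => E1;
  case: (cl (lab C i2) (Hc _ _)) => E2.
all: first [ have := inj3 i0 i1 (etrans E0 (esym E1)) | have := inj3 i0 i2 (etrans E0 (esym E2))
           | have := inj3 i1 i2 (etrans E1 (esym E2)) ]; by [].
Qed.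

Unset Implicit Arguments.

Theorem mainTheorem6 (n : nat) (Ci Cj Ck : xforest n) :
  5 <= n -> critical_triplet Ci Cj Ck ->
  ~ nni_adj Cj Ck /\
  ~ (exists F : xforest n, covers Cj F /\ covers Ck F).
Proof.
move=> n5 [Mi [Mj [Mk [x [p [q1 [q2 H]]]]]]].
case: H => lx [xp [pq1 [pq2 [q12 [q1x [q2x [ip [iq1 [iq2 [J K]]]]]]]]]].
case: J => nj [Fj [cj [_ covj]]].
case: K => nk [Fk [ck [_ covk]]].
have Si := maxtree_sg _ _ Mi.
have Sj := maxtree_sg _ _ Mj.
have Sk := maxtree_sg _ _ Mk.
have n3 : 2 < n by apply: leq_trans n5.
have HXi : is_xforest Ci by case: Mi.
have unl : forall z, internal Ci z -> ~~ labeled Ci z.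
  by move=> z; case: Mi => _ _ _ Hl _; rewrite Hl.
have pxl : adj Ci p (lab Ci x) by rewrite (adj_sym Si).
have xlq1 : lab Ci x != q1 by rewrite eq_sym.
have xlq2 : lab Ci x != q2 by rewrite eq_sym.
have q21 : q2 != q1 by rewrite eq_sym.
have q1p : adj Ci q1 p by rewrite (adj_sym Si).
have q2p : adj Ci q2 p by rewrite (adj_sym Si).
have [r1 [r2 [q1r1 q1r2 r12 r1p r2p]]] := mt_nbr2 Mi (unl _ iq1) q1p.
have [c1 [d1 [q2c1 q2d1 c1d1 c1p d1p]]] := mt_nbr2 Mi (unl _ iq2) q2p.
have r1q : adj Ci r1 q1 by rewrite (adj_sym Si).
have r2q : adj Ci r2 q1 by rewrite (adj_sym Si).
have c1q : adj Ci c1 q2 by rewrite (adj_sym Si).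
have d1q : adj Ci d1 q2 by rewrite (adj_sym Si).
have [a ha] := side_label Si HXi r1q.
have [b hb] := side_label Si HXi r2q.
have [c hc] := side_label Si HXi c1q.
have [d hd] := side_label Si HXi d1q.
have ha' : a \in side Ci q1 p := subsetP (side_incl Si q1p q1r1 r1p) a ha.
have hb' : b \in side Ci q1 p := subsetP (side_incl Si q1p q1r2 r2p) b hb.
have hc' : c \in side Ci q2 p := subsetP (side_incl Si q2p q2c1 c1p) c hc.
have hd' : d \in side Ci q2 p := subsetP (side_incl Si q2p q2d1 d1p) d hd.
have [psij Hpsij] := contract_hyps cj.
have [psik Hpsik] := contract_hyps ck.
have getc : forall (C F : xforest n), is_maxtree C -> covers C F ->
    exists s t phi, contr_hyps C F s t phi.
  move=> C F M [_ [_ [u [v [cv|[[uv _] sd]]]]]].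
  - have [f Hf] := contract_hyps cv; by exists u, v, f.
  - exfalso; exact: (no_del M n3 uv sd).
have [sj [tj [phij Hphij]]] := getc _ _ Mj covj.
have [sk [tk [phik Hphik]]] := getc _ _ Mk covk.
have Rj := expansion Mi Mj x pxl pq1 pq2 q1r1 q1r2 q12 r12 r1p r2p xlq1 xlq2 Hpsij nj ha hb hc' hd' Hphij.
have Rk := expansion Mi Mk x pxl pq2 pq1 q2c1 q2d1 q21 c1d1 c1p d1p xlq2 xlq1 Hpsik nk hc hd ha' hb' Hphik.
have common : forall G uj vj chj uk vk chk, contr_hyps Cj G uj vj chj -> contr_hyps Ck G uk vk chk -> False.
  move=> G uj vj chj uk vk chk Hj Hk.
  case: Rj => u1 [v1 [u2 [v2 [ne E1 E2]]]].
  case: Rk => w1 [z1 [w2 [z2 [_ K1 K2]]]].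
  exact: (final_contra Mj Mk Hj Hk ne E1 E2 K1 K2).
split.
- case => _ _ [u [v [b' [c' [uv [iu [iv [ub [bv [vc [cu Hiso]]]]]]]]]]].
  have [G [f Hf]] := exists_contr Cj u v (adj_neq Sj uv).
  have H1 := Hf uv.
  have H2 := swap_contr b' c' Sj H1 ub vc bv cu.
  have [u' [v' [f' H3]]] := iso_contr Hiso H2.
  exact: common _ _ _ _ _ _ _ H1 H3.
- case => F [cj' ck'].
  have [u [v [f Hf]]] := getc _ _ Mj cj'.
  have [u' [v' [f' Hf']]] := getc _ _ Mk ck'.
  exact: common _ _ _ _ _ _ _ Hf Hf'.
Qed.
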